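(* Let $R$ be a ring and let $\mathfrak{p}$ be a proper left ideal of $R$. The following statements are equivalent: (1) $\mathfrak{p}$ is weakly prime. (2) For left ideals $A,B$ of $R$ both containing $\mathfrak{p}$, $AB\subseteq\mathfrak{p}$ implies $A=\mathfrak{p}$ or $B=\mathfrak{p}$. (3) For left ideals $A,B$ of $R$, $(A+\mathfrak{p})(B+\mathfrak{p})\subseteq\mathfrak{p}$ implies $A\subseteq\mathfrak{p}$ or $B\subseteq\mathfrak{p}$. (4) For left ideals $A,B$ of $R$, $AB\subseteq\mathfrak{p}$ and $\mathfrak{p}\subseteq A$ imply $\mathfrak{p}=A$ or $B\subseteq\mathfrak{p}$. (5) For left ideals $A,B$ of $R$, $(A+\mathfrak{p})B\subseteq\mathfrak{p}$ implies $A\subseteq\mathfrak{p}$ or $B\subseteq\mathfrak{p}$. (6) For $a,b\in R$, $(a+\mathfrak{p})R(b+\mathfrak{p})\subseteq\mathfrak{p}$ implies $a\in\mathfrak{p}$ or $b\in\mathfrak{p}$. (7) For every two-sided ideal $A$ of $R$ and every left ideal $B$ of $R$, $AB\subseteq\mathfrak{p}$ and $\mathfrak{p}B\subseteq\mathfrak{p}$ imply $A\subseteq\mathfrak{p}$ or $B\subseteq\mathfrak{p}$. (8) For $a,b\in R$, $aRb\subseteq\mathfrak{p}$ and $\mathfrak{p}Rb\subseteq\mathfrak{p}$ imply $a\in\mathfrak{p}$ or $b\in\mathfrak{p}$.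
   Context: Rings are associative and unital, not necessarily commutative. A left ideal $\mathfrak{p}$ of $R$ is weakly prime if $\mathfrak{p}\neq R$ and, for all left ideals $A,B$ of $R$, $AB\subseteq\mathfrak{p}$ and $\mathfrak{p}B\subseteq\mathfrak{p}$ imply $A\subseteq\mathfrak{p}$ or $B\subseteq\mathfrak{p}$. For subsets, $(a+\mathfrak{p})R(b+\mathfrak{p})$ denotes the set of all products $xry$ with $x\in a+\mathfrak{p}$, $r\in R$, $y\in b+\mathfrak{p}$. *)

(* Defs.v *)
From mathcomp Require Import all_boot all_algebra.
Set Implicit Arguments. Unset Strict Implicit. Unset Printing Implicit Defensive.
Import GRing.Theory.
Local Open Scope ring_scope.

Section Defs.
Variable R : nzRingType.

Definition subsetR (A B : R -> Prop) : Prop := forall x, A x -> B x.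

Definition left_ideal (A : R -> Prop) : Prop :=
  [/\ A 0, (forall x y, A x -> A y -> A (x - y)) & (forall r x, A x -> A (r * x))].

Definition two_sided_ideal (A : R -> Prop) : Prop :=
  left_ideal A /\ (forall x r, A x -> A (x * r)).

Definition proper_set (p : R -> Prop) : Prop := exists x, ~ p x.

Inductive prodset (A B : R -> Prop) : R -> Prop :=
  | prodset0 : prodset A B 0
  | prodset_mul a b : A a -> B b -> prodset A B (a * b)
  | prodset_add x y : prodset A B x -> prodset A B y -> prodset A B (x + y).

Definition sumset (A B : R -> Prop) : R -> Prop :=
  fun z => exists a b, [/\ A a, B b & z = a + b].

Definition coset (a : R) (p : R -> Prop) : R -> Prop :=
  fun z => exists q, p q /\ z = a + q.

Definition triple_prod (X Y : R -> Prop) : R -> Prop :=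
  fun z => exists x r y, [/\ X x, Y y & z = x * r * y].

Definition weakly_prime (p : R -> Prop) : Prop :=
  proper_set p /\
  forall A B, left_ideal A -> left_ideal B ->
    subsetR (prodset A B) p -> subsetR (prodset p B) p ->
    subsetR A p \/ subsetR B p.

End Defs.

(* Main.v *)
Require Import Defs.
From mathcomp Require Import all_boot all_algebra.
From Stdlib Require Import Classical FunctionalExtensionality PropExtensionality.

Import GRing.Theory.
Local Open Scope ring_scope.

Set Implicit Arguments.
Section Aux.
Variable R : nzRingType.
Variable p : R -> Prop.
Hypothesis hp : left_ideal p.

Lemma p0 : p 0. Proof. by case: hp. Qed.
Lemma pB x y : p x -> p y -> p (x - y). Proof. by case: hp => _ h _; apply: h. Qed.
Lemma pM r x : p x -> p (r * x). Proof. by case: hp => _ _ h; apply: h. Qed.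
Lemma pD x y : p x -> p y -> p (x + y).
Proof. move=> hx hy; rewrite -[y]opprK; apply: pB => //.
  by rewrite -sub0r; apply: pB => //; apply: p0. Qed.

Lemma prod_sub (A B : R -> Prop) :
  (forall a b, A a -> B b -> p (a * b)) -> subsetR (prodset A B) p.
Proof. move=> H x; elim=> [|a b Aa Bb|x1 y1 _ h1 _ h2]; [exact: p0| exact: H|exact: pD]. Qed.

Lemma prod_mono (A B A' B' : R -> Prop) : subsetR A A' -> subsetR B B' ->
  subsetR (prodset A B) (prodset A' B').
Proof. move=> hA hB x; elim=> [|a b Aa Bb|x1 y1 _ h1 _ h2].
- exact: prodset0.
- by apply: prodset_mul; [apply: hA|apply: hB].
- exact: prodset_add. Qed.

Lemma sub_sumsetl (A : R -> Prop) : left_ideal A -> subsetR A (sumset A p).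
Proof. move=> hA a Aa; exists a, 0; split => //; [exact: p0| by rewrite addr0]. Qed.

Lemma sub_sumsetr (A : R -> Prop) : left_ideal A -> subsetR p (sumset A p).
Proof. move=> [A0 _ _] q pq; exists 0, q; split => //; by rewrite add0r. Qed.

Lemma sumset_li (A : R -> Prop) : left_ideal A -> left_ideal (sumset A p).
Proof. move=> [A0 AB AM]; split.
- exists 0, 0; split => //; [exact: p0| by rewrite addr0].
- move=> x y [a [q [Aa pq ->]]] [a' [q' [Aa' pq' ->]]].
  exists (a - a'), (q - q'); split; [exact: AB|exact: pB|].
  by rewrite opprD addrACA.
- move=> r x [a [q [Aa pq ->]]]; exists (r * a), (r * q); split;
  [exact: AM|exact: pM|by rewrite mulrDr].
Qed.

Lemma ext (A : R -> Prop) : subsetR A p -> subsetR p A -> A = p.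
Proof. move=> h1 h2; apply: functional_extensionality => x;
  apply: propositional_extensionality; split; [exact: h1|exact: h2]. Qed.

Lemma sumset_in (A : R -> Prop) : left_ideal A -> subsetR p A -> subsetR (sumset A p) A.
Proof. move=> [A0 AB AM] hpA x [a [q [Aa pq ->]]].
  rewrite -[q]opprK; apply: (AB) => //; rewrite -sub0r; apply: (AB) => //; exact: hpA. Qed.

End Aux.
Unset Implicit Arguments.

Theorem proposition2p21 (R : nzRingType) (p : R -> Prop)
    (hp : left_ideal p) (hprop : proper_set p) :
  [<->
   (* (1) *) weakly_prime p;
   (* (2) *) (forall A B : R -> Prop, left_ideal A -> left_ideal B ->
                subsetR p A -> subsetR p B ->
                subsetR (prodset A B) p -> A = p \/ B = p);
   (* (3) *) (forall A B : R -> Prop, left_ideal A -> left_ideal B ->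
                subsetR (prodset (sumset A p) (sumset B p)) p ->
                subsetR A p \/ subsetR B p);
   (* (4) *) (forall A B : R -> Prop, left_ideal A -> left_ideal B ->
                subsetR (prodset A B) p -> subsetR p A ->
                p = A \/ subsetR B p);
   (* (5) *) (forall A B : R -> Prop, left_ideal A -> left_ideal B ->
                subsetR (prodset (sumset A p) B) p ->
                subsetR A p \/ subsetR B p);
   (* (6) *) (forall a b : R,
                subsetR (triple_prod (coset a p) (coset b p)) p ->
                p a \/ p b);
   (* (7) *) (forall A B : R -> Prop, two_sided_ideal A -> left_ideal B ->
                subsetR (prodset A B) p -> subsetR (prodset p B) p ->
                subsetR A p \/ subsetR B p);
   (* (8) *) (forall a b : R,
                (forall r, p (a * r * b)) ->
                (forall q r, p q -> p (q * r * b)) ->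
                p a \/ p b)].
Proof.
set P1 := weakly_prime p.
set P2 := (forall A B : R -> Prop, left_ideal A -> left_ideal B ->
                subsetR p A -> subsetR p B ->
                subsetR (prodset A B) p -> A = p \/ B = p).
set P3 := (forall A B : R -> Prop, left_ideal A -> left_ideal B ->
                subsetR (prodset (sumset A p) (sumset B p)) p ->
                subsetR A p \/ subsetR B p).
set P4 := (forall A B : R -> Prop, left_ideal A -> left_ideal B ->
                subsetR (prodset A B) p -> subsetR p A ->
                p = A \/ subsetR B p).
set P5 := (forall A B : R -> Prop, left_ideal A -> left_ideal B ->
                subsetR (prodset (sumset A p) B) p ->
                subsetR A p \/ subsetR B p).
set P6 := (forall a b : R,
                subsetR (triple_prod (coset a p) (coset b p)) p ->
                p a \/ p b).
set P7 := (forall A B : R -> Prop, two_sided_ideal A -> left_ideal B ->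
                subsetR (prodset A B) p -> subsetR (prodset p B) p ->
                subsetR A p \/ subsetR B p).
set P8 := (forall a b : R,
                (forall r, p (a * r * b)) ->
                (forall q r, p q -> p (q * r * b)) ->
                p a \/ p b).
have [p0' pB' pM'] := hp.
have i15 : P1 -> P5.
  move=> [_ H1] A B hA hB H; apply: H1 => //.
  - by move=> x hx; apply: H; apply: prod_mono hx => //; exact: sub_sumsetl.
  - by move=> x hx; apply: H; apply: prod_mono hx => //; exact: sub_sumsetr.
have i51 : P5 -> P1.
  move=> H5; split => // A B hA hB HAB HpB; apply: H5 => //.
  apply: prod_sub => // x b [a [q [Aa pq ->]]] Bb; rewrite mulrDl.
  by apply: pD => //; [apply: HAB|apply: HpB]; apply: prodset_mul.
have i53 : P5 -> P3.
  move=> H5 A B hA hB H; apply: H5 => // x hx; apply: H.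
  by apply: prod_mono hx => //; exact: sub_sumsetl.
have i35 : P3 -> P5.
  move=> H3 A B hA hB H; apply: H3 => //.
  apply: prod_sub => // x y hx [b [q [Bb pq ->]]]; rewrite mulrDr.
  apply: pD => //; last exact: pM'.
  by apply: H; apply: prodset_mul.
have i32 : P3 -> P2.
  move=> H3 A B hA hB hpA hpB H.
  have : subsetR A p \/ subsetR B p.
    apply: H3 => // x hx; apply: H; apply: prod_mono hx; exact: sumset_in.
  by case=> h; [left|right]; apply: ext.
have i23 : P2 -> P3.
  move=> H2 A B hA hB H.
  have hA' := sumset_li hp hA; have hB' := sumset_li hp hB.
  have := H2 _ _ hA' hB' (sub_sumsetr p hA) (sub_sumsetr p hB) H.
  by case=> e; [left|right] => x hx; rewrite -e; apply: sub_sumsetl.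
have i14 : P1 -> P4.
  move=> [_ H1] A B hA hB H hpA.
  case: (H1 A B hA hB H) => [x hx|h|h]; last by right.
    by apply: H; apply: prod_mono hx.
  by left; apply: esym; apply: ext.
have i45 : P4 -> P5.
  move=> H4 A B hA hB H.
  case: (H4 _ _ (sumset_li hp hA) hB H (sub_sumsetr p hA)) => [e|h]; last by right.
  by left => x hx; rewrite e; apply: sub_sumsetl.
have i17 : P1 -> P7.
  by move=> [_ H1] A B [hA _] hB; apply: H1.
have i78 : P7 -> P8.
  move=> H7 a b Hab Hpb.
  pose A := fun x => forall s, p (x * s * b).
  pose B := fun x => exists t, x = t * b.
  have hA : two_sided_ideal A.
    split; first split.
    - by move=> s; rewrite !mul0r.
    - by move=> x y hx hy s; rewrite !mulrBl; apply: pB'.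
    - by move=> r x hx s; rewrite -!mulrA; apply: pM'; rewrite !mulrA.
    - by move=> x r hx s; rewrite -(mulrA x r s); apply: hx.
  have hB : left_ideal B.
    split.
    - by exists 0; rewrite mul0r.
    - by move=> x y [t ->] [t' ->]; exists (t - t'); rewrite mulrBl.
    - by move=> r x [t ->]; exists (r * t); rewrite mulrA.
  have : subsetR A p \/ subsetR B p.
    apply: H7 => //.
    - apply: prod_sub => // x y hx [t ->]; rewrite mulrA; exact: hx.
    - apply: prod_sub => // x y hx [t ->]; rewrite mulrA; exact: Hpb.
  case=> h; [left|right]; apply: h.
  - by move=> s; apply: Hab.
  - by exists 1; rewrite mul1r.
have i86 : P8 -> P6.
  move=> H8 a b H; apply: H8.
  - move=> r; apply: H; exists a, r, b; split => //.
    + by exists 0; split; rewrite ?addr0.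
    + by exists 0; split; rewrite ?addr0.
  - move=> q r hq.
    have e : q * r * b = (a + q) * r * b - a * r * b.
      by rewrite !mulrDl addrAC subrr add0r.
    rewrite e; apply: pB'; apply: H.
    + exists (a + q), r, b; split => //; [by exists q| by exists 0; split; rewrite ?addr0].
    + exists a, r, b; split => //; by exists 0; split; rewrite ?addr0.
have i61 : P6 -> P1.
  move=> H6; split => // A B hA hB HAB HpB.
  case: (classic (subsetR A p)) => hAp; first by left.
  right; move=> b Bb.
  have [a na] := not_all_ex_not _ _ hAp.
  have [Aa npa] := imply_to_and _ _ na.
  case: (H6 a b) => // z [x [r [y [[q [pq ->]] [q' [pq' ->]] ->]]]].
  rewrite mulrDr; apply: pD => //; last first.
    by apply: pM'.
  rewrite -mulrA mulrDl; case: hB => _ _ hBm.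
  apply: pD => //; [apply: HAB | apply: HpB]; apply: prodset_mul => //;
    apply: hBm; exact: Bb.
tfae.
- by move=> h; apply: i32; apply: i53; apply: i15.
- exact: i23.
- by move=> h; apply: i14; apply: i51; apply: i35.
- exact: i45.
- by move=> h; apply: i86; apply: i78; apply: i17; apply: i51.
- by move=> h; apply: i17; apply: i61.
- exact: i78.
- by move=> h; apply: i61; apply: i86.
Qed.
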